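(* Let $\mathrm{G}$ be a non-commutative Lie group belonging to the class $\mathcal{C}$, with Lie algebra $\mathfrak{g}$, and let $\mu$ be a left-invariant pseudo-Riemannian metric on $\mathrm{G}$. Then $\mu$ is flat if and only if the restriction of the inner product $\mu(e)$ to the derived ideal $[\mathfrak{g},\mathfrak{g}]$ is degenerate.
   Context: The class $\mathcal{C}$ consists of the non-commutative Lie groups $\mathrm{G}$ whose Lie algebra $\mathfrak{g}$ satisfies: for all $x,y\in\mathfrak{g}$, the bracket $[x,y]$ is a linear combination of $x$ and $y$. A metric is flat if its Riemann curvature tensor vanishes identically. *)

(* Defs.v *)
From HB Require Import structures.
From mathcomp Require Import all_boot all_order all_algebra.
From mathcomp Require Import reals.
Set Implicit Arguments. Unset Strict Implicit. Unset Printing Implicit Defensive.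
Import Order.TTheory GRing.Theory Num.Theory.
Local Open Scope ring_scope.

(* The Lie algebra g of an n-dimensional real Lie group G is identified with
   R^n = 'rV[R]_n, carrying a bracket [.,.] = br.  A left-invariant
   pseudo-Riemannian metric mu on G is the same as the inner product mu(e) on g,
   given by a symmetric nondegenerate Gram matrix B (any signature). *)

Section Defs.
Variable R : realType.
Variable n : nat.
Implicit Types (br : 'rV[R]_n -> 'rV[R]_n -> 'rV[R]_n) (B : 'M[R]_n).

Definition is_lie_bracket br : Prop :=
  [/\ (forall (a : R) x y z, br (a *: x + y) z = a *: br x z + br y z),
      (forall (a : R) x y z, br x (a *: y + z) = a *: br x y + br x z),
      (forall x, br x x = 0) &
      (forall x y z, br x (br y z) + br y (br z x) + br z (br x y) = 0)].

Definition is_pseudo_metric B : Prop := B^T = B /\ \det B != 0.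

Definition ip B (x y : 'rV[R]_n) : R := (x *m B *m y^T) 0 0.

Definition in_class_C br : Prop :=
  (exists x y, br x y != 0) /\
  (forall x y, exists a b : R, br x y = a *: x + b *: y).

(* Koszul formula for left-invariant fields:
   2 mu(nabla_x y, z) = mu([x,y],z) - mu([y,z],x) + mu([z,x],y) *)
Definition koszul br B (x y z : 'rV[R]_n) : R :=
  ip B (br x y) z - ip B (br y z) x + ip B (br z x) y.

(* Levi-Civita connection on left-invariant vector fields: the unique vector
   v with mu(v, e_j) = koszul(x,y,e_j)/2 for all j *)
Definition lc_nabla br B (x y : 'rV[R]_n) : 'rV[R]_n :=
  (2%:R)^-1 *: ((\row_j koszul br B x y (delta_mx 0 j)) *m invmx B).

Definition curv br B (x y z : 'rV[R]_n) : 'rV[R]_n :=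
  lc_nabla br B x (lc_nabla br B y z) - lc_nabla br B y (lc_nabla br B x z)
  - lc_nabla br B (br x y) z.

Definition flat br B : Prop := forall x y z, curv br B x y z = 0.

(* derived ideal [g,g]: span of all brackets (of basis vectors, by bilinearity) *)
Definition derived br : 'M[R]_n :=
  (\sum_(i < n) \sum_(j < n) <<br (delta_mx 0 i) (delta_mx 0 j)>>)%MS.

Definition degenerate_on_derived br B : Prop :=
  exists u : 'rV[R]_n, [/\ (u <= derived br)%MS, u != 0 &
    forall w : 'rV[R]_n, (w <= derived br)%MS -> ip B u w = 0].

End Defs.

(* Main.v *)
Require Import Defs.
From mathcomp Require Import all_boot all_order all_algebra.
From mathcomp Require Import reals.
From mathcomp Require Import ring.
Set Implicit Arguments. Unset Strict Implicit. Unset Printing Implicit Defensive.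
Import Order.TTheory GRing.Theory Num.Theory.
Local Open Scope ring_scope.

Section Main.
Variable R : realType.
Variable n : nat.
Variable br : 'rV[R]_n -> 'rV[R]_n -> 'rV[R]_n.
Hypothesis Hbr : is_lie_bracket br.

Local Notation e i := (delta_mx 0 i : 'rV[R]_n).

Lemma br0l z : br 0 z = 0.
Proof.
case: Hbr => H _ _ _; have := H 1 0 0 z.
rewrite !scale1r addr0 => H'; apply: (@addrI _ (br 0 z)); by rewrite addr0 -H'.
Qed.

Lemma br0r z : br z 0 = 0.
Proof.
case: Hbr => _ H _ _; have := H 1 z 0 0.
rewrite !scale1r addr0 => H'; apply: (@addrI _ (br z 0)); by rewrite addr0 -H'.
Qed.

Lemma brDl x y z : br (x + y) z = br x z + br y z.
Proof. by case: Hbr => H _ _ _; rewrite -[x]scale1r H !scale1r. Qed.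

Lemma brDr x y z : br z (x + y) = br z x + br z y.
Proof. by case: Hbr => _ H _ _; rewrite -[x]scale1r H !scale1r. Qed.

Lemma brZl a x z : br (a *: x) z = a *: br x z.
Proof. by case: Hbr => H _ _ _; rewrite -[a *: x]addr0 H br0l addr0. Qed.

Lemma brZr a x z : br z (a *: x) = a *: br z x.
Proof. by case: Hbr => _ H _ _; rewrite -[a *: x]addr0 H br0r addr0. Qed.

Lemma brxx x : br x x = 0.
Proof. by case: Hbr. Qed.

Lemma brN x y : br x y = - br y x.
Proof.
have := brxx (x + y); rewrite brDl !brDr !brxx add0r addr0.
by move/eqP; rewrite addr_eq0 => /eqP.
Qed.

Lemma br_suml I (r : seq I) (P : pred I) F y :
  br (\sum_(i <- r | P i) F i) y = \sum_(i <- r | P i) br (F i) y.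
Proof. exact: (big_morph (fun x => br x y) (fun a b => brDl a b y) (br0l y)). Qed.

Lemma br_sumr I (r : seq I) (P : pred I) F y :
  br y (\sum_(i <- r | P i) F i) = \sum_(i <- r | P i) br y (F i).
Proof. exact: (big_morph (fun x => br y x) (fun a b => brDr a b y) (br0r y)). Qed.

Lemma br_expand x y :
  br x y = \sum_(i < n) \sum_(j < n) (x 0 i * y 0 j) *: br (e i) (e j).
Proof.
rewrite {1}(row_sum_delta x) br_suml; apply: eq_bigr => i _.
rewrite brZl {1}(row_sum_delta y) br_sumr scaler_sumr; apply: eq_bigr => j _.
by rewrite brZr scalerA.
Qed.

Lemma eE i k : (e i) 0 k = (i == k)%:R.
Proof. by rewrite mxE eqxx eq_sym. Qed.


Hypothesis HC : in_class_C br.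

Lemma K1 i j k : i != j -> k != i -> k != j -> (br (e i) (e j)) 0 k = 0.
Proof.
move=> ij ki kj; case: HC => _ /(_ (e i) (e j)) [a [b ->]].
by rewrite !mxE eqxx /= (negbTE ki) (negbTE kj) !mulr0 addr0.
Qed.

Lemma K2 i j k : i != j -> i != k -> (br (e i) (e j)) 0 j = (br (e i) (e k)) 0 k.
Proof.
move=> ij ik; case: (eqVneq j k) => [-> // | jk].
case: HC => _ /(_ (e i) (e j + e k)) [a [b H]].
rewrite brDr in H.
have Hj := congr1 (fun v : 'rV[R]_n => v 0 j) H; have Hk := congr1 (fun v : 'rV[R]_n => v 0 k) H.
have ji : j != i by rewrite eq_sym.
have ki : k != i by rewrite eq_sym.
have kj : k != j by rewrite eq_sym.
have z1 : (br (e i) (e k)) 0 j = 0 by apply: K1.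
have z2 : (br (e i) (e j)) 0 k = 0 by apply: K1.
move: Hj Hk; rewrite /= !mxE !eqxx /= z1 z2 (negbTE ji) (negbTE ki) (negbTE jk) (negbTE kj).
by rewrite !mulr0 !add0r !addr0 !mulr1 => -> ->.
Qed.

Lemma brNe x y k : (br x y) 0 k = - (br y x) 0 k.
Proof. by rewrite brN mxE. Qed.

Lemma ex_nz : exists i j, br (e i) (e j) != 0.
Proof.
case: HC => [[x [y Hxy]] _].
have : [exists i, exists j, br (e i) (e j) != 0].
  apply: contraNT Hxy => /existsPn H.
  rewrite br_expand big1 // => i _; rewrite big1 // => j _.
  by have /existsPn /(_ j) /negPn /eqP -> := H i; rewrite scaler0.
by case/existsP => i /existsP [j Hij]; exists i, j.
Qed.

Definition lfc (c : 'rV[R]_n) (x : 'rV[R]_n) : R := (c *m x^T) 0 0.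

Lemma lfcE c x : lfc c x = \sum_i c 0 i * x 0 i.
Proof. by rewrite /lfc mxE; apply: eq_bigr => i _; rewrite mxE. Qed.

Lemma structure : exists c : 'rV[R]_n, forall x y, br x y = lfc c x *: y - lfc c y *: x.
Proof.
have [i0 [j0 Hnz]] := ex_nz.
have ij0 : i0 != j0 by apply: contraNneq Hnz => ->; rewrite brxx.
pose oth i := if i == i0 then j0 else i0.
have Hoth i : i != oth i.
  rewrite /oth; case: (eqVneq i i0) => [->|H] //; rewrite eq_sym.
pose c := \row_i (br (e i) (e (oth i))) 0 (oth i).
have Hc i j : i != j -> (br (e i) (e j)) 0 j = c 0 i.
  by move=> ij; rewrite mxE (K2 ij (Hoth i)).
clearbody c.
have K3 i j : br (e i) (e j) = c 0 i *: e j - c 0 j *: e i.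
  case: (eqVneq i j) => [->|ij]; first by rewrite brxx subrr.
  apply/rowP => k; rewrite !mxE /=.
  case: (eqVneq k j) => [->|kj].
    by rewrite (Hc _ _ ij) eq_sym (negbTE ij) mulr1 mulr0 subr0.
  case: (eqVneq k i) => [->|ki].
    by rewrite brNe (Hc j i) 1?eq_sym // mulr1 mulr0 sub0r.
  by rewrite K1 // mulr0 mulr0 subrr.
exists c => x y.
rewrite br_expand.
under eq_bigr => i _ do under eq_bigr => j _ do rewrite K3 scalerBr !scalerA.
under eq_bigr => i _ do rewrite sumrB.
rewrite sumrB; congr (_ - _).
  rewrite lfcE scaler_suml; apply: eq_bigr => i _.
  rewrite [in RHS](row_sum_delta y) scaler_sumr; apply: eq_bigr => j _.
  by rewrite scalerA; congr (_ *: _); ring.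
rewrite [in RHS](row_sum_delta x) scaler_sumr.
apply: eq_bigr => i _; rewrite lfcE scaler_suml; apply: eq_bigr => j _.
by rewrite scalerA; congr (_ *: _); ring.
Qed.

End Main.

Section Geo.
Variables (R : realType) (n : nat) (br : 'rV[R]_n -> 'rV[R]_n -> 'rV[R]_n).
Variables (B : 'M[R]_n) (c : 'rV[R]_n).
Hypothesis Hbr : is_lie_bracket br.
Hypothesis Hs : forall x y, br x y = lfc c x *: y - lfc c y *: x.
Hypothesis Hnc : exists x y, br x y != 0.
Hypothesis BT : B^T = B.
Hypothesis Bu : B \in unitmx.

Local Notation e i := (delta_mx 0 i : 'rV[R]_n).
Local Notation l := (lfc c).
Local Notation h := (c *m invmx B).

Lemma lD x y : l (x + y) = l x + l y.
Proof. by rewrite !lfcE -big_split; apply: eq_bigr => i _; rewrite mxE mulrDr. Qed.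
Lemma lZ a x : l (a *: x) = a * l x.
Proof. by rewrite !lfcE mulr_sumr; apply: eq_bigr => i _; rewrite mxE mulrCA. Qed.
Lemma lB x y : l (x - y) = l x - l y.
Proof. by rewrite lD -scaleN1r lZ mulN1r. Qed.
Lemma l_e j : l (e j) = c 0 j.
Proof. by rewrite /lfc trmx_delta -colE mxE. Qed.

Lemma ipDl x y z : ip B (x + y) z = ip B x z + ip B y z.
Proof. by rewrite /ip !mulmxDl mxE. Qed.
Lemma ipZl a x z : ip B (a *: x) z = a * ip B x z.
Proof. by rewrite /ip -!scalemxAl mxE. Qed.
Lemma ipBl x y z : ip B (x - y) z = ip B x z - ip B y z.
Proof. by rewrite ipDl -scaleN1r ipZl mulN1r. Qed.
Lemma ipC x y : ip B x y = ip B y x.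
Proof.
rewrite /ip -[in LHS](trmxK (x *m B *m y^T)) mxE.
by rewrite !trmx_mul trmxK BT mulmxA.
Qed.
Lemma ipDr x y z : ip B z (x + y) = ip B z x + ip B z y.
Proof. by rewrite ipC ipDl !(ipC z). Qed.
Lemma ipZr a x z : ip B z (a *: x) = a * ip B z x.
Proof. by rewrite ipC ipZl (ipC z). Qed.
Lemma ipBr x y z : ip B z (x - y) = ip B z x - ip B z y.
Proof. by rewrite ipC ipBl !(ipC z). Qed.
Lemma ip_e x j : ip B x (e j) = (x *m B) 0 j.
Proof. by rewrite /ip trmx_delta -colE mxE. Qed.
Lemma ip_hl z : ip B h z = l z.
Proof. by rewrite /ip /lfc mulmxKV. Qed.
Lemma ip_hr z : ip B z h = l z.
Proof. by rewrite ipC ip_hl. Qed.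

Lemma koszulE x y z :
  koszul br B x y z = 2 * (ip B x y * l z - l y * ip B x z).
Proof.
rewrite /koszul !Hs !ipBl !ipZl (ipC z x) (ipC y x) (ipC z y); ring.
Qed.

Lemma nabE x y : lc_nabla br B x y = ip B x y *: h - l y *: x.
Proof.
rewrite /lc_nabla.
have -> : \row_j koszul br B x y (e j) = 2 *: (ip B x y *: c - l y *: (x *m B)).
  apply/rowP => j; rewrite mxE koszulE ip_e l_e.
  move: (x *m B) => xB; rewrite !mxE; ring.
rewrite -scalemxAl scalerA mulVf ?pnatr_eq0 // scale1r mulmxBl -!scalemxAl.
by rewrite mulmxK.
Qed.

Lemma curvE x y z : curv br B x y z = l h *: (ip B x z *: y - ip B y z *: x).
Proof.
rewrite /curv !nabE Hs !ipBr !ipZr !lB !lZ !ip_hr !ipBl !ipZl.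
rewrite (ipC y x); apply/rowP => k; rewrite !mxE; ring.
Qed.

Lemma flat_iff (i0 j0 : 'I_n) : i0 != j0 -> (flat br B <-> l h = 0).
Proof.
move=> ij; split; last first.
  by move=> H x y z; rewrite curvE H scale0r.
move=> F; pose z := (invmx B *m (e i0)^T)^T.
have a1 : ip B (e i0) z = 1.
  rewrite /ip /z trmxK mulmxA mulmxK // trmx_delta mul_delta_mx.
  by rewrite mxE !eqxx.
have := F (e i0) (e j0) z; rewrite curvE a1 => /rowP /(_ j0).
rewrite !mxE !eqxx /= eq_sym (negbTE ij) mulr0 mulr1 subr0 mulr1.
by [].
Qed.

Lemma mxcE v : (v *m c^T) 0 0 = l v.
Proof. by rewrite /lfc -[c *m v^T]trmxK trmx_mul trmxK [RHS]mxE. Qed.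

Lemma mxc v : (v *m c^T == 0) = (l v == 0).
Proof.
apply/eqP/eqP => [H|H]; first by rewrite -mxcE H mxE.
by apply/matrixP => i j; rewrite !ord1 mxcE H mxE.
Qed.

Lemma ex_l : exists a, l a = 1.
Proof.
case: Hnc => x [y].
case: (eqVneq (l x) 0) => [lx|lx]; last first.
  by move=> _; exists ((l x)^-1 *: x); rewrite lZ mulVf.
case: (eqVneq (l y) 0) => [ly|ly]; last first.
  by move=> _; exists ((l y)^-1 *: y); rewrite lZ mulVf.
by rewrite Hs lx ly !scale0r subrr eqxx.
Qed.

Lemma der1 u : (u <= derived br)%MS -> l u = 0.
Proof.
move=> Hu.
have : (derived br <= kermx c^T)%MS.
  apply/sumsmx_subP => i _; apply/sumsmx_subP => j _.
  rewrite genmxE sub_kermx mxc Hs lB !lZ.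
  by rewrite mulrC subrr.
by move=> /(submx_trans Hu); rewrite sub_kermx mxc => /eqP.
Qed.

Lemma br_in x y : (br x y <= derived br)%MS.
Proof.
rewrite (br_expand Hbr); apply: summx_sub => i _; apply: summx_sub => j _.
apply: scalemx_sub; apply: (sumsmx_sup i) => //; apply: (sumsmx_sup j) => //.
by rewrite genmxE.
Qed.

Lemma der2 u : l u = 0 -> (u <= derived br)%MS.
Proof.
move=> lu; have [a la] := ex_l.
have -> : u = br a u by rewrite Hs la lu scale1r scale0r subr0.
exact: br_in.
Qed.

Lemma degen_iff : degenerate_on_derived br B <-> l h = 0.
Proof.
split.
  move=> [u [Hu unz Hperp]]; have lu := der1 Hu.
  case: (eqVneq (l h) 0) => // lh; exfalso; move/negP: unz; apply; apply/eqP.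
  have uB : u *m B = 0.
    apply/rowP => k; rewrite -ip_e [RHS]mxE.
    pose t := l (e k) / l h.
    have w_in : (e k - t *: h <= derived br)%MS.
      by apply: der2; rewrite lB lZ /t divfK // subrr.
    have := Hperp _ w_in.
    by rewrite ipBr ipZr (ipC u h) ip_hl lu mulr0 subr0.
  by rewrite -(mulmxK Bu u) uB mul0mx.
move=> lh; exists h; split.
- exact: der2.
- apply/eqP => h0; have [a la] := ex_l.
  by move: la; rewrite -ip_hl h0 /ip !mul0mx mxE => /eqP; rewrite eq_sym oner_eq0.
- by move=> w /der1 lw; rewrite ip_hl.
Qed.

End Geo.

Theorem theorem1p4 (R : realType) (n : nat)
    (br : 'rV[R]_n -> 'rV[R]_n -> 'rV[R]_n) (B : 'M[R]_n) :
  is_lie_bracket br -> in_class_C br -> is_pseudo_metric B ->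
  (flat br B <-> degenerate_on_derived br B).
Proof.
move=> Hbr HC [BT dB].
have Bu : B \in unitmx by rewrite unitmxE unitfE.
have [c Hs] := structure Hbr HC.
have [i0 [j0 Hnz]] := ex_nz Hbr HC.
have ij : i0 != j0 by apply: contraNneq Hnz => ->; rewrite (brxx Hbr).
have Hnc := HC.1.
rewrite (flat_iff Hs BT Bu ij) (degen_iff Hbr Hs Hnc BT Bu).
by [].
Qed.
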